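(* Let $(A\otimes V,\mu_{A\otimes V})$ be a weak crossed product with associated morphisms $\psi_V^A:V\otimes A\rightarrow A\otimes V$, $\sigma_V^A:V\otimes V\rightarrow A\otimes V$ and idempotent $\nabla_{A\otimes V}$. Let $\psi_A^V:A\otimes V\rightarrow V\otimes A$ satisfy $(V\otimes\mu_A)\circ(\psi_A^V\otimes A)\circ(A\otimes\psi_A^V)=\psi_A^V\circ(\mu_A\otimes V)$, and put $\nabla_{V\otimes A}=(V\otimes\mu_A)\circ((\psi_A^V\circ(\eta_A\otimes V))\otimes A)$. Suppose $\psi_V^A\circ\psi_A^V=\nabla_{A\otimes V}$ and $\psi_A^V\circ\psi_V^A=\nabla_{V\otimes A}$. Put $\sigma_A^V=\psi_A^V\circ\sigma_V^A:V\otimes V\rightarrow V\otimes A$ and $\mu_{V\otimes A}=(V\otimes\mu_A)\circ(\sigma_A^V\otimes\mu_A)\circ(V\otimes\psi_A^V\otimes A)$. Then $(V\otimes A,\mu_{V\otimes A})$ is a weak crossed product with associated morphisms $\psi_A^V,\sigma_A^V$, i.e. $\nabla_{V\otimes A}\circ\sigma_A^V=\sigma_A^V$, $(V\otimes\mu_A)\circ(\sigma_A^V\otimes A)\circ(V\otimes\psi_A^V)\circ(\psi_A^V\otimes V)=(V\otimes\mu_A)\circ(\psi_A^V\otimes A)\circ(A\otimes\sigma_A^V)$ (twisted condition), and $(V\otimes\mu_A)\circ(\sigma_A^V\otimes A)\circ(V\otimes\sigma_A^V)=(V\otimes\mu_A)\circ(\sigma_A^V\otimes A)\circ(V\otimes\psi_A^V)\circ(\sigma_A^V\otimes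 V)$ (cocycle condition); moreover $\mu_{V\otimes A}=\psi_A^V\circ\mu_{A\otimes V}\circ(\psi_V^A\otimes\psi_V^A)$. Furthermore, if $(A\otimes V,\mu_{A\otimes V})$ is a weak crossed product with preunit $\nu:K\rightarrow A\otimes V$, then $(V\otimes A,\mu_{V\otimes A})$ is a weak crossed product with preunit $\upsilon=\psi_A^V\circ\nu$, i.e., with $\beta_\upsilon=(V\otimes\mu_A)\circ(\upsilon\otimes A)$: $(V\otimes\mu_A)\circ(\sigma_A^V\otimes A)\circ(V\otimes\psi_A^V)\circ(\upsilon\otimes V)=\nabla_{V\otimes A}\circ(V\otimes\eta_A)$, $(V\otimes\mu_A)\circ(\sigma_A^V\otimes A)\circ(V\otimes\upsilon)=\nabla_{V\otimes A}\circ(V\otimes\eta_A)$, $(V\otimes\mu_A)\circ(\psi_A^V\otimes A)\circ(A\otimes\upsilon)=\beta_\upsilon$.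
   Context: $\mathcal C$ is a strict monoidal category with tensor product $\otimes$ and unit object $K$ in which every idempotent splits. We write $A\otimes f$ for $id_A\otimes f$. An algebra $A$ has unit $\eta_A$ and product $\mu_A$. Weak crossed products. Let $A$ be an algebra and $V$ an object, and let $\psi_V^A:V\otimes A\rightarrow A\otimes V$ satisfy $(\mu_A\otimes V)\circ(A\otimes\psi_V^A)\circ(\psi_V^A\otimes A)=\psi_V^A\circ(V\otimes\mu_A)$. Then $\nabla_{A\otimes V}=(\mu_A\otimes V)\circ(A\otimes\psi_V^A)\circ(A\otimes V\otimes\eta_A)$ is idempotent. Let $\sigma_V^A:V\otimes V\rightarrow A\otimes V$ with $\nabla_{A\otimes V}\circ\sigma_V^A=\sigma_V^A$. The twisted condition is $(\mu_A\otimes V)\circ(A\otimes\psi_V^A)\circ(\sigma_V^A\otimes A)=(\mu_A\otimes V)\circ(A\otimes\sigma_V^A)\circ(\psi_V^A\otimes V)\circ(V\otimes\psi_V^A)$ and the cocycle condition is $(\mu_A\otimes V)\circ(A\otimes\sigma_V^A)\circ(\sigma_V^A\otimes V)=(\mu_A\otimes V)\circ(A\otimes\sigma_V^A)\circ(\psi_V^A\otimes V)\circ(V\otimes\sigma_V^A)$. With $\mu_{A\otimes V}=(\mu_A\otimes V)\circ(\mu_A\otimes\sigma_V^A)\circ(A\otimes\psi_V^A\otimes V)$, if the twisted and cocycle conditions hold $(A\otimes V,\mu_{A\otimes V})$ is called a weak crossed product (with associated morphisms $\psi_V^A,\sigma_V^A$ and idempotent $\nabla_{A\otimes V}$). For $\nu:K\rightarrow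 A\otimes V$ let $\beta_\nu=(\mu_A\otimes V)\circ(A\otimes\nu)$; a weak crossed product with preunit $\nu$ is one with $(\mu_A\otimes V)\circ(A\otimes\sigma_V^A)\circ(\psi_V^A\otimes V)\circ(V\otimes\nu)=\nabla_{A\otimes V}\circ(\eta_A\otimes V)$, $(\mu_A\otimes V)\circ(A\otimes\sigma_V^A)\circ(\nu\otimes V)=\nabla_{A\otimes V}\circ(\eta_A\otimes V)$ and $(\mu_A\otimes V)\circ(A\otimes\psi_V^A)\circ(\nu\otimes A)=\beta_\nu$. *)

(* Defs.v *)
From mathcomp Require Import ssreflect ssrfun ssrbool eqtype ssrnat seq.

Set Implicit Arguments.
Unset Strict Implicit.
Unset Printing Implicit Defensive.

(* Strict monoidal categories, presented with objects the words (lists) over a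
   type of letters, the tensor product of objects being concatenation and the
   unit object K being the empty word [::].  Every strict monoidal category C
   gives such a structure (letters = objects of C, hom u v = C(⊗u, ⊗v)), and the
   statement only involves letters A, V. *)

Definition hcast (X : Type) (H : seq X -> seq X -> Type) (u u' v v' : seq X)
  (e1 : u = u') (e2 : v = v') (f : H u v) : H u' v' :=
  match e1 in _ = a return H a v' with
  | erefl => match e2 in _ = b return H u b with erefl => f end
  end.

Record SMC := {
  ob : Type;
  hom : seq ob -> seq ob -> Type;
  comp : forall u v w, hom v w -> hom u v -> hom u w;
  idm : forall u, hom u u;
  tens : forall u v u' v', hom u v -> hom u' v' -> hom (u ++ u') (v ++ v');
  comp_assoc : forall u v w x (h : hom w x) (g : hom v w) (f : hom u v),
      comp h (comp g f) = comp (comp h g) f;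
  comp_idl : forall u v (f : hom u v), comp (idm v) f = f;
  comp_idr : forall u v (f : hom u v), comp f (idm u) = f;
  tens_comp : forall u v w u' v' w' (g : hom v w) (f : hom u v)
      (g' : hom v' w') (f' : hom u' v'),
      tens (comp g f) (comp g' f') = comp (tens g g') (tens f f');
  tens_id : forall u u', tens (idm u) (idm u') = idm (u ++ u');
  tens_assoc : forall u v u' v' u'' v'' (f : hom u v) (g : hom u' v')
      (h : hom u'' v''),
      tens (tens f g) h =
      @hcast ob hom _ _ _ _ (catA u u' u'') (catA v v' v'') (tens f (tens g h));
  tens_unitl : forall u v (f : hom u v), tens (idm [::]) f = f;
  tens_unitr : forall u v (f : hom u v),
      tens f (idm [::]) =
      @hcast ob hom _ _ _ _ (esym (cats0 u)) (esym (cats0 v)) f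
}.

Arguments comp {s u v w}.
Arguments idm {s}.
Arguments tens {s u v u' v'}.

Declare Scope smc_scope.
Delimit Scope smc_scope with smc.
Open Scope smc_scope.
Notation "g ∘ f" := (comp g f) (at level 40, left associativity) : smc_scope.
Notation "f ⊗ g" := (tens f g) (at level 38, left associativity) : smc_scope.
Notation "1[ x ]" := (idm [:: x]) (at level 0, format "1[ x ]") : smc_scope.

Section Defs.
Variable C : SMC.

Definition idempotents_split : Prop :=
  forall (u : seq (ob C)) (e : hom u u), e ∘ e = e ->
  exists (w : seq (ob C)) (p : hom u w) (i : hom w u),
    p ∘ i = idm w /\ i ∘ p = e.

Variables (A V : ob C) (eta : hom [::] [:: A]) (mu : hom [:: A; A] [:: A]).

Definition is_algebra : Prop :=
  [/\ mu ∘ (mu ⊗ 1[A]) = mu ∘ (1[A] ⊗ mu),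
      mu ∘ (eta ⊗ 1[A]) = 1[A] & mu ∘ (1[A] ⊗ eta) = 1[A]].

Definition nablaAV (psi : hom [:: V; A] [:: A; V]) : hom [:: A; V] [:: A; V] :=
  (mu ⊗ 1[V]) ∘ (1[A] ⊗ psi) ∘ (1[A] ⊗ 1[V] ⊗ eta).

Definition weak_crossed_product_AV (psi : hom [:: V; A] [:: A; V])
  (sigma : hom [:: V; V] [:: A; V]) : Prop :=
  [/\ (mu ⊗ 1[V]) ∘ (1[A] ⊗ psi) ∘ (psi ⊗ 1[A]) = psi ∘ (1[V] ⊗ mu),
      nablaAV psi ∘ sigma = sigma,
      (mu ⊗ 1[V]) ∘ (1[A] ⊗ psi) ∘ (sigma ⊗ 1[A]) =
      (mu ⊗ 1[V]) ∘ (1[A] ⊗ sigma) ∘ (psi ⊗ 1[V]) ∘ (1[V] ⊗ psi) &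
      (mu ⊗ 1[V]) ∘ (1[A] ⊗ sigma) ∘ (sigma ⊗ 1[V]) =
      (mu ⊗ 1[V]) ∘ (1[A] ⊗ sigma) ∘ (psi ⊗ 1[V]) ∘ (1[V] ⊗ sigma)].

Definition muAV (psi : hom [:: V; A] [:: A; V]) (sigma : hom [:: V; V] [:: A; V]) :
  hom [:: A; V; A; V] [:: A; V] :=
  (mu ⊗ 1[V]) ∘ (mu ⊗ sigma) ∘ (1[A] ⊗ psi ⊗ 1[V]).

Definition betaAV (nu : hom [::] [:: A; V]) : hom [:: A] [:: A; V] :=
  (mu ⊗ 1[V]) ∘ (1[A] ⊗ nu).

Definition preunit_AV (psi : hom [:: V; A] [:: A; V])
  (sigma : hom [:: V; V] [:: A; V]) (nu : hom [::] [:: A; V]) : Prop :=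
  [/\ (mu ⊗ 1[V]) ∘ (1[A] ⊗ sigma) ∘ (psi ⊗ 1[V]) ∘ (1[V] ⊗ nu) =
        nablaAV psi ∘ (eta ⊗ 1[V]),
      (mu ⊗ 1[V]) ∘ (1[A] ⊗ sigma) ∘ (nu ⊗ 1[V]) = nablaAV psi ∘ (eta ⊗ 1[V]) &
      (mu ⊗ 1[V]) ∘ (1[A] ⊗ psi) ∘ (nu ⊗ 1[A]) = betaAV nu].

Definition nablaVA (psi' : hom [:: A; V] [:: V; A]) : hom [:: V; A] [:: V; A] :=
  (1[V] ⊗ mu) ∘ ((psi' ∘ (eta ⊗ 1[V])) ⊗ 1[A]).

Definition muVA (sigma' : hom [:: V; V] [:: V; A])
  (psi' : hom [:: A; V] [:: V; A]) : hom [:: V; A; V; A] [:: V; A] :=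
  (1[V] ⊗ mu) ∘ (sigma' ⊗ mu) ∘ (1[V] ⊗ psi' ⊗ 1[A]).

Definition betaVA (ups : hom [::] [:: V; A]) : hom [:: A] [:: V; A] :=
  (1[V] ⊗ mu) ∘ (ups ⊗ 1[A]).

End Defs.

(* Main.v *)
Require Import Defs.
From mathcomp Require Import ssreflect ssrfun ssrbool eqtype ssrnat seq.

From Stdlib Require Import Eqdep.

Lemma hcastK (X : Type) (H : seq X -> seq X -> Type) (u v : seq X)
  (e1 : u = u) (e2 : v = v) (f : H u v) : @hcast X H u u v v e1 e2 f = f.
Proof. by rewrite (UIP_refl _ _ e1) (UIP_refl _ _ e2). Qed.

Section Gen.
Variable C : SMC.
Implicit Types u v w : seq (ob C).

Lemma tcl u v w x (f : hom v w) (g : hom u v) :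
  (f ⊗ idm x) ∘ (g ⊗ idm x) = (f ∘ g) ⊗ idm x.
Proof. by rewrite -tens_comp comp_idl. Qed.
Lemma tcr u v w x (f : hom v w) (g : hom u v) :
  (idm x ⊗ f) ∘ (idm x ⊗ g) = idm x ⊗ (f ∘ g).
Proof. by rewrite -tens_comp comp_idl. Qed.
Lemma x1 u v u' v' (f : hom u v) (g : hom u' v') :
  (f ⊗ idm v') ∘ (idm u ⊗ g) = f ⊗ g.
Proof. by rewrite -tens_comp comp_idl comp_idr. Qed.
Lemma x2 u v u' v' (f : hom u v) (g : hom u' v') :
  (idm v ⊗ g) ∘ (f ⊗ idm u') = f ⊗ g.
Proof. by rewrite -tens_comp comp_idl comp_idr. Qed.
Lemma xch u v u' v' (f : hom u v) (g : hom u' v') :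
  (f ⊗ idm v') ∘ (idm u ⊗ g) = (idm v ⊗ g) ∘ (f ⊗ idm u').
Proof. by rewrite x1 x2. Qed.
Lemma cA u v w x (h : hom w x) (g : hom v w) (f : hom u v) y (X : hom x y) :
  X ∘ h ∘ g ∘ f = X ∘ (h ∘ g ∘ f).
Proof. by rewrite !comp_assoc. Qed.
End Gen.

Section Ctx.
Variable C : SMC.
Lemma ctx2 (u v w : seq (ob C)) (b : hom v w) (c : hom u v) (e : hom u w) (H : b ∘ c = e)
  z (X : hom w z) : X ∘ b ∘ c = X ∘ e.
Proof. by rewrite -H comp_assoc. Qed.
Lemma ctx3 (u v w t : seq (ob C)) (a : hom w t) (b : hom v w) (c : hom u v) (e : hom u t)
  (H : a ∘ b ∘ c = e) z (X : hom t z) : X ∘ a ∘ b ∘ c = X ∘ e.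
Proof. by rewrite -H !comp_assoc. Qed.
Lemma ctx4 (u v w t s : seq (ob C)) (d : hom t s) (a : hom w t) (b : hom v w) (c : hom u v)
  (e : hom u s)
  (H : d ∘ a ∘ b ∘ c = e) z (X : hom s z) : X ∘ d ∘ a ∘ b ∘ c = X ∘ e.
Proof. by rewrite -H !comp_assoc. Qed.
End Ctx.
Arguments ctx2 {C u v w b c e} H {z} X.
Arguments ctx3 {C u v w t a b c e} H {z} X.
Arguments ctx4 {C u v w t s d a b c e} H {z} X.
Arguments tcl {C u v w} x f g.
Arguments tcr {C u v w} x f g.
Arguments x1 {C u v u' v'} f g.
Arguments x2 {C u v u' v'} f g.
Arguments xch {C u v u' v'} f g.

Ltac crw_ H := first [ rewrite (ctx4 H) | rewrite (ctx3 H) | rewrite (ctx2 H) | rewrite H ];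
  rewrite ?comp_assoc.
Tactic Notation "crw" uconstr(H) := crw_ H.
Ltac tA := rewrite ?tens_assoc ?hcastK.
Lemma tens_assoc_r (C : SMC) (u v u' v' u'' v'' : seq (ob C)) (f : hom u v) (g : hom u' v')
      (h : hom u'' v'') :
  f ⊗ (g ⊗ h) = @hcast (ob C) (@hom C) _ _ _ _ (esym (catA u u' u'')) (esym (catA v v' v''))
     ((f ⊗ g) ⊗ h).
Proof. rewrite tens_assoc. by case: _ / (catA u u' u'') ; case: _ / (catA v v' v''). Qed.
Lemma xu (C : SMC) (v u' v' : seq (ob C)) (f : hom [::] v) (g : hom u' v') :
  (f ⊗ idm v') ∘ g = (idm v ⊗ g) ∘ (f ⊗ idm u').
Proof.
rewrite x2; have := tens_comp f (idm [::]) (idm v') g.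
by rewrite comp_idr comp_idl tens_unitl => ->.
Qed.
Arguments xu {C v u' v'} f g.
Lemma xu2 (C : SMC) (x y z w : ob C) (v' : seq (ob C)) (f : hom [:: x; y] [:: z; w])
  (g : hom [::] v') :
  (f ⊗ idm v') ∘ (idm [:: x; y] ⊗ g) = (idm [:: z; w] ⊗ g) ∘ f.
Proof.
rewrite x1; have := tens_comp (idm [:: z; w]) f g (idm [::]).
rewrite comp_idr comp_idl => ->.
by rewrite tens_unitr hcastK.
Qed.
Arguments xu2 {C x y z w v'} f g.
Arguments tens_assoc_r {C u v u' v' u'' v''} f g h.
Lemma tcr_c (C : SMC) (x u v w y : seq (ob C)) (f : hom v w) (g : hom u v) (X : hom (x ++ w) y) :
  X ∘ (idm x ⊗ f) ∘ (idm x ⊗ g) = X ∘ (idm x ⊗ (f ∘ g)).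
Proof. by rewrite -comp_assoc tcr. Qed.
Lemma tcl_c (C : SMC) (x u v w y : seq (ob C)) (f : hom v w) (g : hom u v) (X : hom (w ++ x) y) :
  X ∘ (f ⊗ idm x) ∘ (g ⊗ idm x) = X ∘ ((f ∘ g) ⊗ idm x).
Proof. by rewrite -comp_assoc tcl. Qed.
Arguments tcr_c {C} x {u v w y} f g {X}.
Arguments tcl_c {C} x {u v w y} f g {X}.
Lemma xu3 (C : SMC) (x z w : ob C) (v' : seq (ob C)) (f : hom [:: x] [:: z; w])
  (g : hom [::] v') :
  (f ⊗ idm v') ∘ (idm [:: x] ⊗ g) = (idm [:: z; w] ⊗ g) ∘ f.
Proof.
rewrite x1; have := tens_comp (idm [:: z; w]) f g (idm [::]).
rewrite comp_idr comp_idl => ->.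
by rewrite tens_unitr hcastK.
Qed.
Arguments xu3 {C x z w v'} f g.
Section M.
Variable C : SMC.
Variables (A V : ob C) (eta : hom [::] [:: A]) (mu : hom [:: A; A] [:: A]).
Hypothesis mA : mu ∘ (mu ⊗ 1[A]) = mu ∘ (1[A] ⊗ mu).
Hypothesis mL : mu ∘ (eta ⊗ 1[A]) = 1[A].
Hypothesis mR : mu ∘ (1[A] ⊗ eta) = 1[A].
Variables (psi : hom [:: V; A] [:: A; V]) (sigma : hom [:: V; V] [:: A; V]).
Hypothesis P : (mu ⊗ 1[V]) ∘ (1[A] ⊗ psi) ∘ (psi ⊗ 1[A]) = psi ∘ (1[V] ⊗ mu).
Hypothesis S : nablaAV eta mu psi ∘ sigma = sigma.
Hypothesis T : (mu ⊗ 1[V]) ∘ (1[A] ⊗ psi) ∘ (sigma ⊗ 1[A]) =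
      (mu ⊗ 1[V]) ∘ (1[A] ⊗ sigma) ∘ (psi ⊗ 1[V]) ∘ (1[V] ⊗ psi).
Hypothesis Cc : (mu ⊗ 1[V]) ∘ (1[A] ⊗ sigma) ∘ (sigma ⊗ 1[V]) =
      (mu ⊗ 1[V]) ∘ (1[A] ⊗ sigma) ∘ (psi ⊗ 1[V]) ∘ (1[V] ⊗ sigma).
Variable psi' : hom [:: A; V] [:: V; A].
Hypothesis P' : (1[V] ⊗ mu) ∘ (psi' ⊗ 1[A]) ∘ (1[A] ⊗ psi') = psi' ∘ (mu ⊗ 1[V]).
Hypothesis H1 : psi ∘ psi' = nablaAV eta mu psi.
Hypothesis H2 : psi' ∘ psi = nablaVA eta mu psi'.

Lemma L1 : psi' ∘ (mu ⊗ 1[V]) ∘ (1[A] ⊗ psi) = (1[V] ⊗ mu) ∘ (psi' ⊗ 1[A]).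
Proof.
crw (esym P').
crw (tcr [:: A] psi' psi).
rewrite H2 /nablaVA.
rewrite -(tcr [:: A]).
rewrite [1[A] ⊗ (1[V] ⊗ mu)]tens_assoc_r hcastK tens_id.
rewrite !comp_assoc.
crw (xch psi' mu).
rewrite -(tens_id [:: V] [:: A]) (tens_assoc 1[V] 1[A] mu) hcastK.

crw (tcr [:: V] mu (1[A] ⊗ mu)).
rewrite -mA -tcr [1[V] ⊗ (mu ⊗ 1[A])]tens_assoc_r hcastK.
rewrite -(tens_id [:: A] [:: A]) [psi' ⊗ (1[A] ⊗ 1[A])]tens_assoc_r hcastK.
crw (tcl [:: A] (1[V] ⊗ mu) (psi' ⊗ 1[A])).
rewrite [1[A] ⊗ ((psi' ∘ eta ⊗ 1[V]) ⊗ 1[A])]tens_assoc_r hcastK.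
crw (tcl [:: A] ((1[V] ⊗ mu) ∘ (psi' ⊗ 1[A])) (1[A] ⊗ (psi' ∘ (eta ⊗ 1[V])))).
rewrite -tcr.
rewrite !comp_assoc P'.
rewrite [1[A] ⊗ (eta ⊗ 1[V])]tens_assoc_r hcastK.
crw (tcl [:: V] mu (1[A] ⊗ eta)).
by rewrite mR tens_id comp_idr.
Qed.

Lemma D1' : nablaVA eta mu psi' ∘ psi' = psi'.
Proof.
rewrite /nablaVA -tcl !comp_assoc.
rewrite (tens_assoc eta 1[V] 1[A]) hcastK tens_id.
crw (xu eta psi').
rewrite P' -(tens_id [:: A] [:: V]) -comp_assoc.
rewrite [eta ⊗ (1[A] ⊗ 1[V])]tens_assoc_r hcastK.
by rewrite (tcl [:: V] mu (eta ⊗ 1[A])) mL tens_id comp_idr.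
Qed.

Lemma D2 : psi' ∘ nablaAV eta mu psi = psi'.
Proof. by rewrite -H1 comp_assoc H2 D1'. Qed.

Lemma L2 : psi ∘ (1[V] ⊗ mu) ∘ (psi' ⊗ 1[A]) = (mu ⊗ 1[V]) ∘ (1[A] ⊗ psi).
Proof.
rewrite -P.
crw (tcl [:: A] psi psi').
rewrite H1 /nablaAV -!tcl !comp_assoc.
rewrite (tens_assoc mu 1[V] 1[A]) hcastK tens_id.
crw (x2 mu psi).
rewrite -(x1 mu psi) !comp_assoc.
rewrite -(tens_id [:: A] [:: V]) [mu ⊗ (1[A] ⊗ 1[V])]tens_assoc_r hcastK.
crw (tcl [:: V] mu (mu ⊗ 1[A])).
rewrite mA -tcl ?comp_assoc.
rewrite (tens_assoc 1[A] mu 1[V]) hcastK.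
rewrite -(tens_id [:: A] [:: A]) (tens_assoc 1[A] 1[A] psi) hcastK.
rewrite (tens_assoc 1[A] psi 1[A]) hcastK.
rewrite (tens_assoc (1[A] ⊗ 1[V]) eta 1[A]) hcastK.
rewrite (tens_assoc 1[A] 1[V] (eta ⊗ 1[A])) hcastK.
rewrite ?comp_assoc -!(comp_assoc (mu ⊗ 1[V])) !(tcr [:: A]) P.
by rewrite -(comp_assoc psi) (tcr [:: V]) mL tens_id comp_idr.
Qed.

Lemma M0 : (mu ⊗ 1[V]) ∘ (1[A] ⊗ sigma) ∘ (psi ⊗ 1[V]) ∘ (1[V] ⊗ nablaAV eta mu psi)
  = (mu ⊗ 1[V]) ∘ (1[A] ⊗ sigma) ∘ (psi ⊗ 1[V]).
Proof.
rewrite /nablaAV -!(tcr [:: V]) !comp_assoc.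
rewrite (tens_assoc_r 1[V] mu 1[V]) hcastK.
crw (tcl [:: V] psi (1[V] ⊗ mu)).
rewrite -P -!tcl !comp_assoc.
rewrite (tens_assoc mu 1[V] 1[V]) hcastK tens_id.
crw (x2 mu sigma).
rewrite -(x1 mu sigma) !comp_assoc.
rewrite -(tens_id [:: A] [:: V]) (tens_assoc_r mu 1[A] 1[V]) hcastK.
rewrite (tcl [:: V] mu (mu ⊗ 1[A])) mA -(tcl [:: V] mu (1[A] ⊗ mu)).
rewrite (tens_assoc 1[A] mu 1[V]) hcastK.
rewrite -(tens_id [:: A] [:: A]) (tens_assoc 1[A] 1[A] sigma) hcastK.
rewrite (tens_assoc 1[A] psi 1[V]) hcastK.
rewrite (tens_assoc 1[A] 1[V] eta) hcastK (tens_assoc_r 1[V] 1[A] (1[V] ⊗ eta)) hcastK.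
rewrite (tens_assoc psi 1[A] 1[V]) hcastK tens_id.
rewrite (tens_assoc_r 1[V] 1[A] psi) hcastK tens_id.
crw (xch psi psi).
crw (xch psi (1[V] ⊗ eta)).
rewrite -(tens_id [:: A] [:: V]) (tens_assoc 1[A] 1[V] psi) hcastK.
rewrite (tens_assoc 1[A] 1[V] (1[V] ⊗ eta)) hcastK.
rewrite !(tcr_c [:: A]) !comp_assoc -T.
rewrite (tens_assoc_r 1[V] 1[V] eta) hcastK tens_id.
rewrite -(comp_assoc _ (sigma ⊗ 1[A])) (xu2 sigma eta) !comp_assoc.
have S' := S; rewrite /nablaAV tens_id in S'.
by rewrite S'.
Qed.

Lemma NE : nablaAV eta mu psi ∘ (eta ⊗ 1[V]) = psi ∘ (1[V] ⊗ eta).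
Proof.
rewrite /nablaAV (tens_assoc 1[A] 1[V] eta) hcastK.
have E1 : (1[A] ⊗ (1[V] ⊗ eta)) ∘ (eta ⊗ 1[V]) = (eta ⊗ idm [:: V; A]) ∘ (1[V] ⊗ eta).
  by rewrite x2 -(x1 eta (1[V] ⊗ eta)) tens_unitl.
crw E1.
have E2 : (1[A] ⊗ psi) ∘ (eta ⊗ idm [:: V; A]) = (eta ⊗ idm [:: A; V]) ∘ psi.
  by rewrite x2 -(x1 eta psi) tens_unitl.
crw E2.
rewrite -(tens_id [:: A] [:: V]) (tens_assoc_r eta 1[A] 1[V]) hcastK.
by rewrite (tcl [:: V] mu (eta ⊗ 1[A])) mL tens_id comp_idl.
Qed.

Lemma Sx : (mu ⊗ 1[V]) ∘ (1[A] ⊗ sigma) ∘ (psi ⊗ 1[V]) ∘ (1[V] ⊗ (eta ⊗ 1[V])) = sigma.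
Proof.
rewrite -M0 (tcr_c [:: V]) NE -(tcr_c [:: V]) -T.
rewrite (tens_assoc_r 1[V] 1[V] eta) hcastK tens_id.
rewrite -(comp_assoc _ (sigma ⊗ 1[A])) (xu2 sigma eta) !comp_assoc.
have S' := S; rewrite /nablaAV tens_id in S'.
by rewrite S'.
Qed.

Lemma M1 : (mu ⊗ 1[V]) ∘ (1[A] ⊗ sigma) ∘ (nablaAV eta mu psi ⊗ 1[V])
  = (mu ⊗ 1[V]) ∘ (1[A] ⊗ sigma).
Proof.
rewrite /nablaAV -!tcl !comp_assoc.
rewrite (tens_assoc mu 1[V] 1[V]) hcastK tens_id.
crw (x2 mu sigma).
rewrite -(x1 mu sigma) !comp_assoc.
rewrite -(tens_id [:: A] [:: V]) (tens_assoc_r mu 1[A] 1[V]) hcastK.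
rewrite (tcl [:: V] mu (mu ⊗ 1[A])) mA -(tcl [:: V] mu (1[A] ⊗ mu)).
rewrite (tens_assoc 1[A] mu 1[V]) hcastK.
rewrite -(tens_id [:: A] [:: A]) (tens_assoc 1[A] 1[A] sigma) hcastK.
rewrite (tens_assoc 1[A] psi 1[V]) hcastK.
rewrite (tens_assoc (1[A] ⊗ 1[V]) eta 1[V]) hcastK (tens_assoc 1[A] 1[V] (eta ⊗ 1[V])) hcastK.
by rewrite !(tcr_c [:: A]) !comp_assoc Sx.
Qed.

Lemma G2 : (1[V] ⊗ mu) ∘ ((psi' ∘ sigma) ⊗ 1[A]) ∘ (1[V] ⊗ psi') ∘ (psi' ⊗ 1[V]) =
      (1[V] ⊗ mu) ∘ (psi' ⊗ 1[A]) ∘ (1[A] ⊗ (psi' ∘ sigma)).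
Proof.
rewrite -(tcr [:: A]) !comp_assoc P'.
rewrite -(tcl [:: A]) !comp_assoc -L1.
crw T.
rewrite (tcr_c [:: V]) H1.
crw M0.
rewrite (tcl_c [:: V] psi psi') H1.
crw M1.
done.
Qed.

Lemma G3 : (1[V] ⊗ mu) ∘ ((psi' ∘ sigma) ⊗ 1[A]) ∘ (1[V] ⊗ (psi' ∘ sigma)) =
      (1[V] ⊗ mu) ∘ ((psi' ∘ sigma) ⊗ 1[A]) ∘ (1[V] ⊗ psi') ∘ ((psi' ∘ sigma) ⊗ 1[V]).
Proof.
transitivity (psi' ∘ (mu ⊗ 1[V]) ∘ (1[A] ⊗ sigma) ∘ (sigma ⊗ 1[V])).
  rewrite -(tcl [:: A]) !comp_assoc -L1.
  crw T.
  rewrite -(tcr [:: V]) !comp_assoc (tcr_c [:: V] psi psi') H1 (tcr_c [:: V] (nablaAV eta mu psi) sigma) S.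
  by crw (esym Cc).
rewrite -(tcl [:: V] psi' sigma) !comp_assoc.
crw G2.
by rewrite -(tcr [:: A]) !comp_assoc P'.
Qed.

Lemma G4 : muVA mu (psi' ∘ sigma) psi' = psi' ∘ muAV mu psi sigma ∘ (psi ⊗ psi).
Proof.
rewrite /muVA /muAV.
transitivity ((1[V] ⊗ mu) ∘ (psi' ⊗ 1[A]) ∘ (sigma ⊗ 1[A]) ∘ (1[V] ⊗ (1[V] ⊗ mu))
   ∘ (1[V] ⊗ (psi' ⊗ 1[A]))).
  rewrite -(x1 (psi' ∘ sigma) mu) -(tcl [:: A]) !comp_assoc.
  rewrite -(tens_id [:: V] [:: V]) (tens_assoc 1[V] 1[V] mu) hcastK.
  by rewrite (tens_assoc 1[V] psi' 1[A]) hcastK.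
rewrite -(x1 psi psi) -(x2 mu sigma) !comp_assoc.
rewrite -(tens_id [:: V] [:: V]) (tens_assoc_r mu 1[V] 1[V]) hcastK.
rewrite -(tens_id [:: A] [:: V]) (tens_assoc_r psi 1[A] 1[V]) hcastK.
rewrite (tcl_c [:: V] (mu ⊗ 1[V]) (1[A] ⊗ psi)).
rewrite (tcl_c [:: V] ((mu ⊗ 1[V]) ∘ (1[A] ⊗ psi)) (psi ⊗ 1[A])) P.
rewrite -(tcl [:: V] psi (1[V] ⊗ mu)) !comp_assoc.
rewrite (tens_assoc 1[V] mu 1[V]) hcastK.
rewrite -(tens_id [:: V] [:: A]) (tens_assoc 1[V] 1[A] psi) hcastK.
rewrite (tcr_c [:: V] (mu ⊗ 1[V]) (1[A] ⊗ psi)) -L2 -!(tcr [:: V]) !comp_assoc.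
crw (esym T).
by rewrite L1.
Qed.

Lemma G1 : nablaVA eta mu psi' ∘ (psi' ∘ sigma) = psi' ∘ sigma.
Proof. by rewrite comp_assoc D1'. Qed.

Lemma RV : nablaVA eta mu psi' ∘ (1[V] ⊗ eta) = psi' ∘ (eta ⊗ 1[V]).
Proof.
rewrite /nablaVA -comp_assoc (xu3 (psi' ∘ (eta ⊗ 1[V])) eta) comp_assoc.
rewrite -(tens_id [:: V] [:: A]) (tens_assoc 1[V] 1[A] eta) hcastK.
by rewrite (tcr [:: V]) mR tens_id comp_idl.
Qed.

Variable nu : hom [::] [:: A; V].
Hypothesis U1 : (mu ⊗ 1[V]) ∘ (1[A] ⊗ sigma) ∘ (psi ⊗ 1[V]) ∘ (1[V] ⊗ nu) =
        nablaAV eta mu psi ∘ (eta ⊗ 1[V]).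
Hypothesis U2 : (mu ⊗ 1[V]) ∘ (1[A] ⊗ sigma) ∘ (nu ⊗ 1[V]) = nablaAV eta mu psi ∘ (eta ⊗ 1[V]).
Hypothesis U3 : (mu ⊗ 1[V]) ∘ (1[A] ⊗ psi) ∘ (nu ⊗ 1[A]) = betaAV mu nu.

Lemma PU3 : (1[V] ⊗ mu) ∘ (psi' ⊗ 1[A]) ∘ (1[A] ⊗ (psi' ∘ nu)) = betaVA mu (psi' ∘ nu).
Proof.
rewrite -(tcr [:: A]) !comp_assoc P' -comp_assoc.
rewrite -/(betaAV mu nu) -U3 !comp_assoc L1 -comp_assoc (tcl [:: A] psi' nu).
done.
Qed.

Lemma PU2 : (1[V] ⊗ mu) ∘ ((psi' ∘ sigma) ⊗ 1[A]) ∘ (1[V] ⊗ (psi' ∘ nu)) =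
              nablaVA eta mu psi' ∘ (1[V] ⊗ eta).
Proof.
rewrite RV -(tcl [:: A]) !comp_assoc -L1.
crw T.
rewrite -(tcr [:: V]) !comp_assoc (tcr_c [:: V] psi psi') H1.
crw M0.
crw U1.
by have := D2; rewrite /nablaAV !comp_assoc => ->.
Qed.

Lemma PU1 : (1[V] ⊗ mu) ∘ ((psi' ∘ sigma) ⊗ 1[A]) ∘ (1[V] ⊗ psi') ∘ ((psi' ∘ nu) ⊗ 1[V]) =
              nablaVA eta mu psi' ∘ (1[V] ⊗ eta).
Proof.
rewrite RV -(tcl [:: V] psi' nu) !comp_assoc.
crw G2.
rewrite -(tcr [:: A]) !comp_assoc P'.
crw U2.
by have := D2; rewrite /nablaAV !comp_assoc => ->.
Qed.
End M.
Theorem proposition1p10 (C : SMC) (Hsplit : idempotents_split C)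
  (A V : ob C) (eta : hom [::] [:: A]) (mu : hom [:: A; A] [:: A])
  (Halg : is_algebra eta mu)
  (psi : hom [:: V; A] [:: A; V]) (sigma : hom [:: V; V] [:: A; V])
  (Hwcp : weak_crossed_product_AV eta mu psi sigma)
  (psi' : hom [:: A; V] [:: V; A])
  (Hpsi' : (1[V] ⊗ mu) ∘ (psi' ⊗ 1[A]) ∘ (1[A] ⊗ psi') = psi' ∘ (mu ⊗ 1[V]))
  (H1 : psi ∘ psi' = nablaAV eta mu psi)
  (H2 : psi' ∘ psi = nablaVA eta mu psi') :
  let sigma' := psi' ∘ sigma in
  [/\ nablaVA eta mu psi' ∘ sigma' = sigma',
      (* twisted condition *)
      (1[V] ⊗ mu) ∘ (sigma' ⊗ 1[A]) ∘ (1[V] ⊗ psi') ∘ (psi' ⊗ 1[V]) =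
      (1[V] ⊗ mu) ∘ (psi' ⊗ 1[A]) ∘ (1[A] ⊗ sigma'),
      (* cocycle condition *)
      (1[V] ⊗ mu) ∘ (sigma' ⊗ 1[A]) ∘ (1[V] ⊗ sigma') =
      (1[V] ⊗ mu) ∘ (sigma' ⊗ 1[A]) ∘ (1[V] ⊗ psi') ∘ (sigma' ⊗ 1[V]),
      muVA mu sigma' psi' = psi' ∘ muAV mu psi sigma ∘ (psi ⊗ psi) &
      (* preunit part *)
      forall nu : hom [::] [:: A; V],
        preunit_AV eta mu psi sigma nu ->
        let ups := psi' ∘ nu in
        [/\ (1[V] ⊗ mu) ∘ (sigma' ⊗ 1[A]) ∘ (1[V] ⊗ psi') ∘ (ups ⊗ 1[V]) =
              nablaVA eta mu psi' ∘ (1[V] ⊗ eta),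
            (1[V] ⊗ mu) ∘ (sigma' ⊗ 1[A]) ∘ (1[V] ⊗ ups) =
              nablaVA eta mu psi' ∘ (1[V] ⊗ eta) &
            (1[V] ⊗ mu) ∘ (psi' ⊗ 1[A]) ∘ (1[A] ⊗ ups) = betaVA mu ups]].
Proof.
case: Halg => mA mL mR; case: Hwcp => P S T Cc.
move=> sigma'; rewrite /sigma'.
split.
- by eapply G1; eassumption.
- by eapply G2; eassumption.
- by eapply G3; eassumption.
- by eapply G4; eassumption.
- intros nu [U1 U2 U3]; cbv zeta; split.
  + by eapply PU1; eassumption.
  + by eapply PU2; eassumption.
  + by eapply PU3; eassumption.
Qed.
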